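(* The following two statements are equivalent. (i) For every amphicheiral knot $K$, with Conway polynomial $C(z)$, there is $F\in\mathbb Z_4[z^2]$ with $F^2=C(z)\,C(z^2)\,C(iz)$ in $\mathbb Z_4[z^2]$. (ii) For every amphicheiral knot $K$ and every $i\ge 1$, $pc_{4i}(K)\equiv 0\pmod 2$.
   Context: A knot is amphicheiral if it is isotopic to its mirror image, disregarding string orientation. The Conway polynomial $C(z)$ of a knot lies in $1+z^2\mathbb Z[z^2]$. Define $\exp_{\mathbb Z}\colon x\mathbb Z[[x]]\to 1+x\mathbb Z[[x]]$ by $\exp_{\mathbb Z}\big(\sum_{i\ge1} b_i x^i\big)=\prod_{i\ge 1}(1+(-x)^i)^{b_i}$; it is a bijection taking addition to multiplication, and $\log_{\mathbb Z}$ denotes its inverse. Regarding $C$ as a power series in the variable $x=z^2$, write $\log_{\mathbb Z}(C)=\sum_{i\ge1} pc_{2i}\, z^{2i}$; the integers $pc_{2i}=pc_{2i}(K)$ are knot invariants. The product $C(z)C(z^2)C(iz)$ lies in $\mathbb Z[z^2]$ and is reduced modulo $4$. *)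

(* Defs.v *)
(* Knots are encoded as closed braids (Alexander's theorem);
   knot equivalence is generated by Markov moves (Markov's theorem) plus
   orientation reversal (unoriented knots). The Conway polynomial is
   characterised via the Alexander polynomial computed from the (unreduced)
   Burau matrix (Fox calculus of the closed-braid presentation). *)
From HB Require Import structures.
From mathcomp Require Import all_boot all_order all_algebra.
From Stdlib Require Import Relations.

Set Implicit Arguments.
Unset Strict Implicit.
Unset Printing Implicit Defensive.

Import Order.TTheory GRing.Theory Num.Theory.
Local Open Scope ring_scope.

(* A braid word on n strands: letter k (nonzero int, |k| <= n-1) stands for
   sigma_|k| ^ (sign k). *)
Definition valid_braid (x : nat * seq int) : bool :=
  (0 < x.1)%N && all (fun k : int => (k != 0) && (absz k < x.1)%N) x.2.

Inductive mstep : nat * seq int -> nat * seq int -> Prop :=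
| ms_cancel n (u v : seq int) (k : int) :
    mstep (n, u ++ k :: - k :: v) (n, u ++ v)
| ms_far n (u v : seq int) (i j : int) :
    (absz i + 1 < absz j)%N ->
    mstep (n, u ++ i :: j :: v) (n, u ++ j :: i :: v)
| ms_braid n (u v : seq int) (i : nat) :
    mstep (n, u ++ [:: Posz i; Posz i.+1; Posz i] ++ v)
          (n, u ++ [:: Posz i.+1; Posz i; Posz i.+1] ++ v)
| ms_conj n (w : seq int) (k : int) :
    mstep (n, k :: w) (n, rcons w k)
| ms_stab n (w : seq int) (e : bool) :
    mstep (n, w) (n.+1, rcons w ((-1) ^+ e * (Posz n)))
| ms_rev n (w : seq int) :
    mstep (n, w) (n, rev w).

Definition vstep (x y : nat * seq int) : Prop :=
  valid_braid x /\ valid_braid y /\ mstep x y.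

Definition knot_equiv : relation (nat * seq int) :=
  clos_refl_sym_trans _ vstep.

(* permutation of strands induced by a braid word (0-based positions) *)
Definition transp (i j : nat) : nat :=
  if j == i then i.+1 else if j == i.+1 then i else j.

Definition strand_perm (w : seq int) : nat -> nat :=
  foldr (fun k f => fun j => transp (absz k).-1 (f j)) id w.

Definition is_knot (n : nat) (w : seq int) : Prop :=
  valid_braid (n, w) /\
  forall j, (j < n)%N -> exists m, iter m (strand_perm w) 0%N = j.

Definition mirror (w : seq int) : seq int := map (fun k => - k) w.

Definition amphicheiral (n : nat) (w : seq int) : Prop :=
  knot_equiv (n, w) (n, mirror w).

Definition KF := {fraction {poly rat}}.
Definition sF : KF := tofrac ('X : {poly rat}).   (* s = t^(1/2) *)
Definition tF : KF := sF ^+ 2.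

Definition blk (i : nat) (x00 x01 x10 x11 : KF) (a b : nat) : KF :=
  if (a == i) && (b == i) then x00
  else if (a == i) && (b == i.+1) then x01
  else if (a == i.+1) && (b == i) then x10
  else if (a == i.+1) && (b == i.+1) then x11
  else (a == b)%:R.

(* unreduced Burau matrix of sigma_|k|^(sign k) *)
Definition burau (n : nat) (k : int) : 'M[KF]_n :=
  \matrix_(a, b)
    if 0 < k then blk (absz k).-1 (1 - tF) tF 1 0 a b
    else blk (absz k).-1 0 1 tF^-1 (1 - tF^-1) a b.

Definition burau_word (n : nat) (w : seq int) : 'M[KF]_n :=
  foldr (fun k M => burau n k *m M) 1%:M w.

Lemma succ_ltn n (a : 'I_n.-1) : (a.+1 < n)%N.
Proof. by case: n a => [|n] [a Ha]. Qed.

Definition ordS n (a : 'I_n.-1) : 'I_n := Ordinal (succ_ltn a).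

(* (1,1)-minor of I - Burau(beta): the Alexander polynomial up to units *)
Definition alex_minor (n : nat) (w : seq int) : KF :=
  \det (\matrix_(a < n.-1, b < n.-1)
          ((1%:M - burau_word n w) (ordS a) (ordS b))).

Definition conway (n : nat) (w : seq int) (C : {poly int}) : Prop :=
  C`_0 = 1 /\
  exists (e : bool) (k : int),
    (map_poly (fun z : int => z%:~R : KF) C).[sF - sF^-1]
      = (-1) ^+ e * sF ^ (2 * k) * alex_minor n w.

(* C regarded as a polynomial in x = z^2 *)
Definition even_part (C : {poly int}) : {poly int} :=
  \poly_(j < size C) C`_(2 * j).

(* C(z) C(z^2) C(iz), as a polynomial in x = z^2 *)
Definition conway_triple (C : {poly int}) : {poly int} :=
  let P := even_part C in P * (P \Po 'X ^+ 2) * (P \Po - 'X).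

(* truncations of exp_Z(sum_i b_i x^i) = prod_i (1 + (-x)^i)^(b_i),
   split into the factors with nonnegative / negative exponents *)
Definition expZ_pos (b : nat -> int) (N : nat) : {poly int} :=
  \prod_(1 <= i < N.+1)
     (1 + (- 'X) ^+ i) ^+ (if 0 <= b i then absz (b i) else 0%N).
Definition expZ_neg (b : nat -> int) (N : nat) : {poly int} :=
  \prod_(1 <= i < N.+1)
     (1 + (- 'X) ^+ i) ^+ (if b i < 0 then absz (b i) else 0%N).

(* b = log_Z(c), i.e. exp_Z(sum_{i>=1} b_i x^i) = c in Z[[x]] *)
Definition is_logZ (c : {poly int}) (b : nat -> int) : Prop :=
  forall N j, (j <= N)%N -> (expZ_pos b N)`_j = (c * expZ_neg b N)`_j.

(* Main.v *)
Require Import Defs.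
From HB Require Import structures.
From mathcomp Require Import all_boot all_order all_algebra.
From mathcomp Require Import ring zify.
Import Order.TTheory GRing.Theory Num.Theory.
Local Open Scope ring_scope.
Set Implicit Arguments.
Unset Strict Implicit.
Unset Printing Implicit Defensive.

Section Cgr.
Variable R : comNzRingType.
Implicit Types f g h K : {poly R}.

Definition cgr (n : nat) f g := exists q, f - g = 'X^n * q.

Lemma cgrP n f g : cgr n f g <-> forall j, (j < n)%N -> f`_j = g`_j.
Proof.
split=> [[q e] j jn|H].
  by apply/eqP; rewrite -subr_eq0 -coefB e coefXnM jn.
exists (drop_poly n (f - g)).
rewrite -[LHS](poly_take_drop n) mulrC.
suff -> : take_poly n (f - g) = 0 by rewrite add0r.
apply/polyP=> i; rewrite coef_take_poly coef0 coefB.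
by case: ifP => // /H ->; rewrite subrr.
Qed.

Lemma cgr_refl n f : cgr n f f.
Proof. by exists 0; rewrite subrr mulr0. Qed.

Lemma cgr_sym n f g : cgr n f g -> cgr n g f.
Proof. by case=> q e; exists (-q); rewrite mulrN -e opprB. Qed.

Lemma cgr_trans n f g h : cgr n f g -> cgr n g h -> cgr n f h.
Proof.
case=> q1 e1 [q2 e2]; exists (q1 + q2).
by rewrite mulrDr -e1 -e2 addrA subrK.
Qed.

Lemma cgrD n f1 g1 f2 g2 : cgr n f1 g1 -> cgr n f2 g2 -> cgr n (f1 + f2) (g1 + g2).
Proof.
case=> q1 e1 [q2 e2]; exists (q1 + q2).
by rewrite mulrDr -e1 -e2 opprD addrACA.
Qed.

Lemma cgrN n f g : cgr n f g -> cgr n (- f) (- g).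
Proof. by case=> q e; exists (-q); rewrite mulrN -e opprB opprK addrC. Qed.

Lemma cgrB n f1 g1 f2 g2 : cgr n f1 g1 -> cgr n f2 g2 -> cgr n (f1 - f2) (g1 - g2).
Proof. by move=> h1 h2; apply: cgrD => //; apply: cgrN. Qed.

Lemma cgrM n f1 g1 f2 g2 : cgr n f1 g1 -> cgr n f2 g2 -> cgr n (f1 * f2) (g1 * g2).
Proof.
case=> q1 e1 [q2 e2]; exists (q1 * f2 + g1 * q2).
have -> : f1 * f2 - g1 * g2 = (f1 - g1) * f2 + g1 * (f2 - g2) by ring.
by rewrite e1 e2; ring.
Qed.

Lemma cgr_le m n f g : (m <= n)%N -> cgr n f g -> cgr m f g.
Proof.
move=> mn /cgrP H; apply/cgrP => j jm; apply: H; exact: leq_trans jm mn.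
Qed.

Lemma cgr_comp n f g q s : q = 'X * s -> cgr n f g -> cgr n (f \Po q) (g \Po q).
Proof.
move=> -> [r e]; exists (s ^+ n * (r \Po ('X * s))).
by rewrite -comp_polyB e comp_polyM rmorphXn /= comp_polyX exprMn mulrA.
Qed.

Lemma cgr_reg n K f : K`_0 = 1 -> cgr n (K * f) 0 -> cgr n f 0.
Proof.
move=> K0 /cgrP H; apply/cgrP => j; rewrite coef0.
elim/ltn_ind: j => j IH jn.
have := H j jn; rewrite coef0 coefM big_ord_recl /= K0 mul1r subn0.
rewrite big1 ?addr0 // => k _; rewrite IH ?mulr0 //.
  by have := ltn_ord k; rewrite /bump /=; lia.
by have := ltn_ord k; rewrite /bump /=; lia.
Qed.

Lemma reg0 K f : K`_0 = 1 -> K * f = 0 -> f = 0.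
Proof.
move=> K0 e; apply/polyP => j.
have /cgrP := @cgr_reg j.+1 K f K0 ltac:(by rewrite e; apply: cgr_refl).
by move=> ->.
Qed.

End Cgr.

Lemma cgr_map (R S : comNzRingType) (phi : {rmorphism R -> S}) n f g :
  cgr n f g -> cgr n (map_poly phi f) (map_poly phi g).
Proof.
by case=> q e; exists (map_poly phi q); rewrite -rmorphB e rmorphM rmorphXn /= map_polyX.
Qed.



Notation R4 := {poly 'Z_4}.

Lemma four0 : (4%:R : 'Z_4) = 0. Proof. by apply/val_inj. Qed.
Lemma two_neq0 : (2%:R : 'Z_4) != 0. Proof. by []. Qed.

Lemma two2 : (2%:R : R4) * 2%:R = 0.
Proof. by rewrite -natrM -polyC_natr four0. Qed.

Lemma sq2 (c : 'Z_4) : 2%:R * c ^+ 2 = 2%:R * c.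
Proof. by case: c => [[|[|[|[|]]]] ?] //; apply/val_inj. Qed.

Lemma twoN (c : 'Z_4) : 2%:R * (- c) = 2%:R * c.
Proof. by case: c => [[|[|[|[|]]]] ?] //; apply/val_inj. Qed.

Lemma frob (F : R4) : 2%:R * F ^+ 2 = 2%:R * (F \Po 'X^2).
Proof.
elim/poly_ind: F => [|G c IH]; first by rewrite comp_poly0 expr0n mulr0.
rewrite comp_poly_MXaddC.
have e : 2%:R * (G * 'X + c%:P) ^+ 2
   = (2%:R * G ^+ 2) * 'X^2 + (2%:R * 2%:R) * (c%:P * G * 'X) + (2%:R * c%:P ^+ 2).
  by ring.
rewrite e IH two2 mul0r addr0 -polyC_natr -rmorphXn -!rmorphM /= sq2.
by rewrite rmorphM /=; ring.
Qed.

Lemma sig2 (F : R4) : 2%:R * (F \Po - 'X) = 2%:R * F.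
Proof.
elim/poly_ind: F => [|G c IH]; first by rewrite comp_poly0.
rewrite comp_poly_MXaddC mulrDr mulrA IH.
have -> : (2%:R : R4) * G * - 'X = 2%:R * G * 'X - (2%:R * 2%:R) * G * 'X by ring.
by rewrite two2; ring.
Qed.

Lemma half (D : R4) : 2%:R * D = 0 -> exists H, D = 2%:R * H.
Proof.
move=> e; exists (map_poly (fun z : 'Z_4 => if z == 2%:R then 1 else 0) D).
apply/polyP => i; rewrite -polyC_natr coefCM coef_map_id0 //.
have /polyP/(_ i) := e; rewrite -polyC_natr coefCM coef0.
by case: (D`_i) => [[|[|[|[|]]]] ?] // _; apply/val_inj.
Qed.

Lemma tau_inj (E : R4) : E \Po 'X^2 = 0 -> E = 0.
Proof.
move=> e; apply/polyP => i; have /polyP/(_ (2 * i)%N) := e.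
by rewrite coef_comp_poly_Xn // (dvdn_mulr _ (dvdnn 2)) mulKn // !coef0.
Qed.

Lemma L_sq (p F : R4) : p`_0 = 1 ->
  F ^+ 2 = p * (p \Po 'X^2) * (p \Po - 'X) -> p * (p \Po - 'X) = p \Po 'X^2.
Proof.
move=> p0 eF.
set tp := p \Po 'X^2.
have h1 : 2%:R * (p * (p \Po - 'X)) = 2%:R * tp.
  by rewrite mulrCA sig2 mulrCA -expr2 frob.
have h2 : 2%:R * (F \Po 'X^2) = 2%:R * (tp \Po 'X^2).
  rewrite -frob eF -frob.
  have -> : (2%:R : R4) * (p * tp * (p \Po - 'X)) = tp * (2%:R * (p * (p \Po - 'X))) by ring.
  by rewrite h1; ring.
have h3 : 2%:R * (F - tp) = 0.
  apply: tau_inj; rewrite comp_polyM comp_polyB.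
  by rewrite -polyC_natr comp_polyC polyC_natr mulrBr h2 subrr.
have [H eH] := half h3.
have eF2 : F ^+ 2 = tp ^+ 2.
  have -> : F = tp + 2%:R * H by rewrite -eH addrC subrK.
  have -> : (tp + 2%:R * H) ^+ 2 = tp ^+ 2 + 2%:R * (tp * H) * 2%:R + (2%:R * 2%:R) * H ^+ 2 by ring.
  have -> : 2%:R * (tp * H) * 2%:R = (2%:R * 2%:R) * (tp * H) :> R4 by ring.
  by rewrite two2 !mul0r !addr0.
have tp0 : tp`_0 = 1 by rewrite /tp coef_comp_poly_Xn.
apply/eqP; rewrite -subr_eq0; apply/eqP; apply: (reg0 tp0).
rewrite mulrBr; apply/eqP; rewrite subr_eq0; apply/eqP.
by rewrite -expr2 -eF2 eF; ring.
Qed.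

Definition fq (i : nat) : R4 := 1 + (- 'X) ^+ i.
Definition sig (x : R4) := x \Po - 'X.
Definition tau (x : R4) := x \Po 'X^2.
Definition uu i := fq i * sig (fq i).
Definition vv i := tau (fq i).
Definition ppb (b : nat -> int) i := if 0 <= b i then absz (b i) else 0%N.
Definition nnb (b : nat -> int) i := if b i < 0 then absz (b i) else 0%N.
Definition GG b i := uu i ^+ ppb b i * vv i ^+ nnb b i.
Definition HH b i := vv i ^+ ppb b i * uu i ^+ nnb b i.

Lemma sig_fq i : sig (fq i) = 1 + 'X^i.
Proof. by rewrite /sig /fq rmorphD rmorph1 rmorphXn /= rmorphN /= comp_polyX opprK. Qed.

Lemma tau_fq i : tau (fq i) = 1 + (-1) ^+ i * 'X^i ^+ 2.
Proof. by rewrite /tau /fq rmorphD rmorph1 rmorphXn /= rmorphN /= comp_polyX [in LHS]exprNn exprAC. Qed.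

Lemma fq_e i : fq i = 1 + (-1) ^+ i * 'X^i.
Proof. by rewrite /fq [in LHS]exprNn. Qed.

Lemma uv_odd i : odd i -> uu i = vv i.
Proof.
move=> oi; rewrite /uu /vv sig_fq tau_fq fq_e -signr_odd oi expr1; ring.
Qed.

Lemma uv_even i : ~~ odd i -> uu i = vv i + 2%:R * 'X^i.
Proof.
move=> oi; rewrite /uu /vv sig_fq tau_fq fq_e -signr_odd (negbTE oi) expr0; ring.
Qed.

Lemma hz (R : comNzRingType) i (q : {poly R}) : q.[0] = 0 -> (0 < i)%N ->
  ((1 + (-'X) ^+ i) \Po q).[0] = 1.
Proof.
move=> q0 i0; rewrite horner_comp hornerD hornerC horner_exp hornerN hornerX q0.
by rewrite oppr0 expr0n gtn_eqF // addr0.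
Qed.

Lemma fq0 i : (0 < i)%N -> (fq i).[0] = 1.
Proof. by move=> i0; rewrite -[fq i]comp_polyXr; apply: hz => //; rewrite hornerX. Qed.

Lemma vv0 i : (0 < i)%N -> (vv i).[0] = 1.
Proof. by move=> i0; apply: hz => //; rewrite hornerXn expr0n. Qed.

Lemma uu0 i : (0 < i)%N -> (uu i).[0] = 1.
Proof.
move=> i0; rewrite /uu /sig hornerM fq0 // hz // ?mulr1 //.
by rewrite hornerN hornerX oppr0.
Qed.

Lemma m2 : - (2%:R : R4) = 2%:R.
Proof. have e := two2; rewrite -[RHS]subr0 -e; ring. Qed.

Lemma two_even k : (2 %| k)%N -> (2%:R : R4) * k%:R = 0.
Proof.
case/dvdnP => m ->; rewrite natrM mulrCA two2 mulr0 //.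
Qed.

Lemma two_odd k : ~~ (2 %| k)%N -> (2%:R : R4) * k%:R = 2%:R.
Proof.
move=> ok; have ok' : odd k by move: ok; rewrite dvdn2 negbK.
rewrite -(odd_double_half k) ok' natrD -muln2 natrM.
have e := two2; rewrite mulrDr mulrCA e mulr0 addr0 mulr1 //.
Qed.

Lemma powlem (v e : R4) k : (v + 2%:R * e) ^+ k = v ^+ k + 2%:R * e * (k%:R * v ^+ k.-1).
Proof.
elim: k => [|k IH]; first by rewrite !expr0 mul0r mulr0 addr0.
rewrite exprS IH; case: k IH => [|k] IH.
  by rewrite !expr0 mul0r mulr0 !addr0 !mulr1 expr1.
have e2 := two2.
have -> : (v + 2%:R * e) * (v ^+ k.+1 + 2%:R * e * (k.+1%:R * v ^+ k.+1.-1))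
  = v ^+ k.+2 + 2%:R * e * (k.+2%:R * v ^+ k.+2.-1) + (2%:R * 2%:R) * (e * e * k.+1%:R * v ^+ k)
  by rewrite /= !exprS -[k.+2]addn1 -[k.+1]addn1 !natrD; ring.
by rewrite e2 mul0r addr0.
Qed.

Lemma GH_eq b i : (odd i || (2 %| b i)%Z) -> GG b i = HH b i.
Proof.
case: (boolP (odd i)) => oi /=; first by rewrite /GG /HH uv_odd.
rewrite /dvdz /= => h2.
rewrite /GG /HH /ppb /nnb (uv_even oi).
case: ifP => [b0|b0].
  have -> : (b i < 0) = false by rewrite ltNge b0.
  rewrite !expr0 !mulr1 powlem.
  have -> : 2%:R * 'X^i * ((absz (b i))%:R * vv i ^+ (absz (b i)).-1)
     = ('X^i * vv i ^+ (absz (b i)).-1) * (2%:R * (absz (b i))%:R) by ring.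
  by rewrite two_even // mulr0 addr0.
have -> : (b i < 0) = true by rewrite ltNge b0.
rewrite !expr0 !mul1r powlem.
have -> : 2%:R * 'X^i * ((absz (b i))%:R * vv i ^+ (absz (b i)).-1)
   = ('X^i * vv i ^+ (absz (b i)).-1) * (2%:R * (absz (b i))%:R) by ring.
by rewrite two_even // mulr0 addr0.
Qed.

Lemma GH_odd b i : ~~ odd i -> ~~ (2 %| b i)%Z ->
  GG b i - HH b i = 'X^i * (2%:R * vv i ^+ (absz (b i)).-1).
Proof.
move=> oi; rewrite /dvdz /= => h2.
rewrite /GG /HH /ppb /nnb (uv_even oi).
case: ifP => [b0|b0].
  have -> : (b i < 0) = false by rewrite ltNge b0.
  rewrite !expr0 !mulr1 powlem.
  have -> : vv i ^+ `|b i| + 2%:R * 'X^i * ((absz (b i))%:R * vv i ^+ (absz (b i)).-1)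
     - vv i ^+ `|b i|
     = ('X^i * vv i ^+ (absz (b i)).-1) * (2%:R * (absz (b i))%:R) by ring.
  by rewrite two_odd //; ring.
have -> : (b i < 0) = true by rewrite ltNge b0.
rewrite !expr0 !mul1r powlem.
have -> : vv i ^+ `|b i| - (vv i ^+ `|b i| + 2%:R * 'X^i * ((absz (b i))%:R * vv i ^+ (absz (b i)).-1))
   = ('X^i * vv i ^+ (absz (b i)).-1) * - (2%:R * (absz (b i))%:R) by ring.
by rewrite two_odd // m2; ring.
Qed.

Definition Bp b N : R4 := \prod_(1 <= i < N.+1) fq i ^+ ppb b i.
Definition An b N : R4 := \prod_(1 <= i < N.+1) fq i ^+ nnb b i.

Lemma horner0_comp (x q : R4) : q.[0] = 0 -> (x \Po q).[0] = x.[0].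
Proof. by move=> q0; rewrite horner_comp q0. Qed.

Lemma An0 b N : (An b N).[0] = 1.
Proof.
rewrite /An horner_prod big_nat_cond big1 // => i /andP[/andP[hi _] _].
by rewrite horner_exp fq0 // expr1n.
Qed.

Lemma K0 b N : (An b N * sig (An b N) * tau (An b N))`_0 = 1.
Proof.
rewrite -horner_coef0 !hornerM /sig /tau !horner0_comp ?An0 ?mulr1 //.
  by rewrite hornerXn expr0n.
by rewrite hornerN hornerX oppr0.
Qed.

Lemma cgr_sig n (f g : R4) : cgr n f g -> cgr n (sig f) (sig g).
Proof. by apply: cgr_comp (-1) _; rewrite mulrN1. Qed.

Lemma cgr_tau n (f g : R4) : cgr n f g -> cgr n (tau f) (tau g).
Proof. by apply: cgr_comp 'X _; rewrite expr2. Qed.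

Lemma eG b N : \prod_(1 <= i < N.+1) GG b i = Bp b N * sig (Bp b N) * tau (An b N).
Proof.
rewrite /Bp /An /sig /tau !rmorph_prod -!big_split /=; apply: eq_bigr => i _.
by rewrite /GG /uu /vv /sig /tau !rmorphXn /= exprMn.
Qed.

Lemma eH b N : \prod_(1 <= i < N.+1) HH b i = tau (Bp b N) * (An b N * sig (An b N)).
Proof.
rewrite /Bp /An /sig /tau !rmorph_prod -!big_split /=; apply: eq_bigr => i _.
by rewrite /HH /uu /vv /sig /tau !rmorphXn /= exprMn.
Qed.

Lemma star (p : R4) b N : cgr N.+1 (Bp b N) (p * An b N) ->
  cgr N.+1 ((p * sig p - tau p) * (An b N * sig (An b N) * tau (An b N)))
     (\prod_(1 <= i < N.+1) GG b i - \prod_(1 <= i < N.+1) HH b i).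
Proof.
move=> h; rewrite eG eH.
set A := An b N; set B := Bp b N.
have hs : cgr N.+1 (sig B) (sig p * sig A) by rewrite /sig -comp_polyM; apply: cgr_sig.
have ht : cgr N.+1 (tau B) (tau p * tau A) by rewrite /tau -comp_polyM; apply: cgr_tau.
have -> : (p * sig p - tau p) * (A * sig A * tau A)
   = (p * A) * (sig p * sig A) * tau A - (tau p * tau A) * (A * sig A) by ring.
apply: cgrB; apply: cgrM; try apply: cgr_refl.
  by apply: cgrM; apply: cgr_sym.
by apply: cgr_sym.
Qed.

Lemma cgr_sub0 n (x y : R4) : cgr n (x - y) 0 -> cgr n x y.
Proof. by case=> q e; exists q; rewrite -e subr0. Qed.

Lemma suff_core (p : R4) b N : cgr N.+1 (Bp b N) (p * An b N) ->
  (forall i, (0 < i)%N -> ~~ odd i -> (2 %| b i)%Z) ->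
  cgr N.+1 (p * sig p) (tau p).
Proof.
move=> h hb; have := star h.
have -> : \prod_(1 <= i < N.+1) GG b i = \prod_(1 <= i < N.+1) HH b i.
  apply: eq_big_nat => i /andP[hi _]; apply: GH_eq.
  by case: (boolP (odd i)) => //= oi; apply: hb.
rewrite subrr mulrC => /(cgr_reg (K0 b N)); exact: cgr_sub0.
Qed.

Lemma HH0 b i : (0 < i)%N -> (HH b i).[0] = 1.
Proof. by move=> i0; rewrite /HH hornerM !horner_exp uu0 // vv0 // !expr1n mulr1. Qed.

Lemma nec_core (p : R4) b m : (0 < m)%N -> ~~ odd m -> ~~ (2 %| b m)%Z ->
  (forall i, (0 < i)%N -> (i < m)%N -> ~~ odd i -> (2 %| b i)%Z) ->
  cgr m.+1 (Bp b m) (p * An b m) -> p * sig p = tau p -> False.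
Proof.
move=> m0 om bm hb h e; have := star h; rewrite e subrr mul0r.
rewrite big_nat_recr //= [X in _ - X]big_nat_recr //=.
have -> : \prod_(1 <= i < m) GG b i = \prod_(1 <= i < m) HH b i.
  apply: eq_big_nat => i /andP[hi him]; apply: GH_eq.
  by case: (boolP (odd i)) => //= oi; apply: hb.
rewrite -mulrBr GH_odd // => /cgrP /(_ m (ltnSn m)).
rewrite coef0 mulrCA coefXnM ltnn subnn coef0M.
rewrite -!horner_coef0 hornerM horner_exp vv0 // expr1n mulr1 -polyC_natr hornerC horner_prod.
rewrite big_nat_cond big1 ?mul1r; last first.
  by move=> i /andP[/andP[hi _] _]; rewrite HH0.
by move=> /esym/eqP; rewrite (negbTE two_neq0).
Qed.

Lemma pn_int (s : int) :
  ((if 0 <= s then absz s else 0%N)%:R - (if s < 0 then absz s else 0%N)%:R : int) = s.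
Proof. rewrite !natz; case: ifP; case: ifP; lia. Qed.

Lemma fpow n (c : int) k : (0 < n)%N ->
  exists r, (1 + 'X^n * c%:P) ^+ k = 1 + 'X^n * r /\ r`_0 = k%:R * c.
Proof.
move=> n0; elim: k => [|k [r [e r0]]].
  by exists 0; rewrite expr0 mulr0 addr0 coef0 mul0r.
exists (c%:P + r + 'X^n * c%:P * r); split.
  by rewrite exprS e; ring.
rewrite !coefD coefC /= r0 -mulrA coefXnM n0 addr0 -[k.+1]addn1 natrD; ring.
Qed.

Lemma expZneg0 b N : (expZ_neg b N)`_0 = 1.
Proof.
rewrite -horner_coef0 /expZ_neg horner_prod big_nat_cond big1 // => i /andP[/andP[hi _] _].
by rewrite horner_exp -[1 + _]comp_polyXr hz ?hornerX // expr1n.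
Qed.

Section Log.
Variable P : {poly int}.
Hypothesis P0 : P`_0 = 1.

Definition stepb (g : nat -> int) (M : nat) : int :=
  - ((-1) ^+ M * (expZ_pos g M.-1 - P * expZ_neg g M.-1)`_M).

Fixpoint bf (N : nat) : nat -> int :=
  if N is M.+1 then (fun i => if i == M.+1 then stepb (bf M) M.+1 else bf M i)
  else (fun _ => 0).

Definition blog i := bf i i.

Lemma bf_stable N M i : (i <= N)%N -> (N <= M)%N -> bf M i = bf N i.
Proof.
move=> iN; elim: M => [|M IH] NM; first by move: NM; rewrite leqn0 => /eqP ->.
case: (eqVneq N M.+1) => [-> //|ne].
have NM' : (N <= M)%N by move: NM ne; rewrite leq_eqVlt => /orP[/eqP -> /eqP|].
rewrite /= ifN ?IH //; apply/eqP => ei; move: iN NM'; rewrite ei => a b.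
by have := leq_trans a b; rewrite ltnn.
Qed.

Lemma blog_bf N i : (i <= N)%N -> blog i = bf N i.
Proof. by move=> iN; rewrite /blog (bf_stable (leqnn i) iN). Qed.

Lemma expZ_ext (b b' : nat -> int) N : (forall i, (0 < i)%N -> (i <= N)%N -> b i = b' i) ->
  expZ_pos b N = expZ_pos b' N /\ expZ_neg b N = expZ_neg b' N.
Proof.
move=> H; split; apply: eq_big_nat => i /andP[h1 h2]; by rewrite H.
Qed.

Lemma cond N : cgr N.+1 (expZ_pos (bf N) N) (P * expZ_neg (bf N) N).
Proof.
elim: N => [|N IH].
  rewrite /expZ_pos /expZ_neg !big_geq // mulr1; apply/cgrP => j.
  by rewrite ltnS leqn0 => /eqP ->; rewrite coef1 P0.
set g := bf N; set g' := bf N.+1.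
have [ep en] : expZ_pos g' N = expZ_pos g N /\ expZ_neg g' N = expZ_neg g N.
  apply: expZ_ext => i _ iN; rewrite /g' /= ifN //; apply/eqP => ei.
  by move: iN; rewrite ei ltnn.
have ePos : expZ_pos g' N.+1 = expZ_pos g N * (1 + (- 'X) ^+ N.+1) ^+ (if 0 <= g' N.+1 then absz (g' N.+1) else 0%N).
  by rewrite -ep /expZ_pos big_nat_recr.
have eNeg : expZ_neg g' N.+1 = expZ_neg g N * (1 + (- 'X) ^+ N.+1) ^+ (if g' N.+1 < 0 then absz (g' N.+1) else 0%N).
  by rewrite -en /expZ_neg big_nat_recr.
have gs : g' N.+1 = stepb g N.+1 by rewrite /g' /= eqxx.
set s := g' N.+1 in ePos eNeg gs.
set c : int := (-1) ^+ N.+1.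
have fe : 1 + (- 'X) ^+ N.+1 = 1 + 'X^(N.+1) * c%:P :> {poly int}.
  by rewrite exprNn mulrC /c rmorphXn /= rmorphN /= rmorph1.
have [rp [erp rp0]] := fpow c (if 0 <= s then absz s else 0%N) (ltn0Sn N).
have [rn [ern rn0]] := fpow c (if s < 0 then absz s else 0%N) (ltn0Sn N).
case: IH => q eq.
set Ep := expZ_pos g N in eq ePos; set En := expZ_neg g N in eq eNeg.
have eZ : expZ_pos g' N.+1 - P * expZ_neg g' N.+1
   = 'X^(N.+1) * (P * En * (rp - rn) + q * (1 + 'X^(N.+1) * rp)).
  rewrite ePos eNeg fe erp ern.
  have -> : Ep = P * En + 'X^(N.+1) * q by rewrite -eq addrC subrK.
  ring.
apply/cgrP => j jN; apply/eqP; rewrite -subr_eq0 -coefB eZ coefXnM.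
case: ifP => // /negbT; rewrite -leqNgt => Nj.
have -> : j = N.+1 by apply/eqP; rewrite eqn_leq Nj andbT -ltnS.
rewrite subnn coefD !coef0M coefB coefD coef1 coefXnM ltn0Sn addr0 /= mulr1.
rewrite rp0 rn0 P0 expZneg0 mul1r -mulrBl pn_int gs /stepb /=.
have q0 : q`_0 = (Ep - P * En)`_N.+1 by rewrite eq coefXnM ltnn subnn.
rewrite -/g -/Ep -/En -q0.
have cc : c * c = 1 by rewrite /c -exprMn mulrNN mulr1 expr1n.
by rewrite -/c mulNr mulrAC cc mul1r addNr.
Qed.

Lemma blog_ok : is_logZ P blog.
Proof.
move=> N j jN.
have [ep en] : expZ_pos blog N = expZ_pos (bf N) N /\ expZ_neg blog N = expZ_neg (bf N) N.
  by apply: expZ_ext => i _ iN; apply: blog_bf.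
by rewrite ep en; move/cgrP: (cond N); apply.
Qed.

End Log.

Notation phi := (map_poly (fun z : int => z%:~R : 'Z_4)).

Lemma phi_f i : phi (1 + (- 'X) ^+ i) = fq i.
Proof. by rewrite rmorphD rmorph1 rmorphXn rmorphN /= map_polyX. Qed.

Lemma phi_pos b N : phi (expZ_pos b N) = Bp b N.
Proof. rewrite /expZ_pos rmorph_prod; apply: eq_bigr => i _; rewrite rmorphXn; congr (_ ^+ _); exact: phi_f. Qed.

Lemma phi_neg b N : phi (expZ_neg b N) = An b N.
Proof. by rewrite /expZ_neg rmorph_prod; apply: eq_bigr => i _; rewrite rmorphXn; congr (_ ^+ _); exact: phi_f. Qed.

Lemma logZ_cgr (P : {poly int}) b N : is_logZ P b -> cgr N.+1 (Bp b N) (phi P * An b N).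
Proof.
move=> hl; rewrite -phi_pos -phi_neg -rmorphM; apply: cgr_map.
by apply/cgrP => j jN; apply: hl.
Qed.

Lemma phi_triple (C : {poly int}) : phi (conway_triple C)
  = phi (even_part C) * tau (phi (even_part C)) * sig (phi (even_part C)).
Proof.
rewrite /conway_triple !rmorphM /= !map_comp_poly rmorphXn rmorphN /= map_polyX //.
Qed.

Lemma even0 (C : {poly int}) : C`_0 = 1 -> (even_part C)`_0 = 1.
Proof.
move=> C0; rewrite /even_part coef_poly muln0; case: ifP => // /negbT.
rewrite -leqNgt => hs; move: C0; rewrite nth_default //.
Qed.

Lemma phi0 (P : {poly int}) : P`_0 = 1 -> (phi P)`_0 = 1.
Proof. by move=> P0; rewrite coef_map /= P0. Qed.

Theorem mainTheorem5 :
  (forall (n : nat) (w : seq int) (C : {poly int}),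
      is_knot n w -> amphicheiral n w -> conway n w C ->
      exists F : {poly 'Z_4},
        F ^+ 2 = map_poly (fun z : int => z%:~R : 'Z_4) (conway_triple C))
  <->
  (forall (n : nat) (w : seq int) (C : {poly int}) (b : nat -> int),
      is_knot n w -> amphicheiral n w -> conway n w C ->
      is_logZ (even_part C) b ->
      forall i : nat, (0 < i)%N -> (2 %| b (2 * i)%N)%Z).
Proof.
split.
  move=> H1 n w C b hk ha hc hl i i0.
  have [F eF] := H1 n w C hk ha hc.
  have p0 := phi0 (even0 hc.1).
  rewrite phi_triple in eF.
  have e := L_sq p0 eF.
  suff claim : forall m, (0 < m)%N -> ~~ odd m -> (2 %| b m)%Z.
    by apply: claim; [rewrite muln_gt0 | rewrite oddM].
  elim/ltn_ind => m IH m0 om.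
  case: (boolP (2 %| b m)%Z) => // bm; exfalso.
  apply: (nec_core m0 om bm _ (logZ_cgr m hl) e).
  by move=> j j0 jm oj; apply: IH.
move=> H2 n w C hk ha hc.
have P0 := even0 hc.1.
have hl := blog_ok P0.
set b := blog _ in hl.
have hb : forall i, (0 < i)%N -> ~~ odd i -> (2 %| b i)%Z.
  move=> i i0 oi; have := H2 n w C b hk ha hc hl i./2.
  rewrite mulnC muln2 even_halfK //; apply.
  by move: i0 oi; case: i => [|[|i]].
set p := phi (even_part C).
have e : p * sig p = tau p.
  apply/polyP => j.
  by have /cgrP := suff_core (logZ_cgr j hl) hb; apply.
exists (tau p); rewrite phi_triple -/p -e; ring.
Qed.
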